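(* Let $f:(\mathbb R^2,q)\to(\mathbb R^3,p)$ be a smooth germ with a corank 1 singularity at $q$ whose curvature parabola $\Delta_p$ is not a line (so that $\kappa_a(p)$ is defined). Then $\kappa_a(p)=0$ if and only if the axial vector $v_a$ is a binormal direction.
   Context: $T_pM=\operatorname{im}df_q$, $N_pM$ its orthogonal complement with a fixed orientation. First fundamental form $I(X,Y)=\langle df_qX,df_qY\rangle$; second fundamental form $II$: the symmetric bilinear map $T_q\mathbb R^2\times T_q\mathbb R^2\to N_pM$ with $II(\partial_u,\partial_u)=f_{uu}(q)^\perp$, $II(\partial_u,\partial_v)=f_{uv}(q)^\perp$, $II(\partial_v,\partial_v)=f_{vv}(q)^\perp$ ($\perp$ = orthogonal projection to $N_pM$); $II_\nu=\langle II,\nu\rangle$. Curvature parabola $\Delta_p=\{II(X,X):I(X,X)=1\}$; in coordinates with $f_v(q)=0$, $|f_u(q)|=1$ it is parametrized by $\eta(y)=II(\partial_u+y\partial_v,\partial_u+y\partial_v)$, $y\in\mathbb R$, and is a non-degenerate parabola, half-line, line or point. A nonzero $X\in T_q\mathbb R^2$ is asymptotic if there is a nonzero $\nu\in N_pM$ with $II_\nu(X,Y)=0$ for all $Y$; such $\nu$ is a binormal direction. Axial vector $v_a$: for a non-degenerate parabola, the unit vector along the axis of symmetry pointing to its interior; for a half-line, $\eta'(y)/|\eta'(y)|$ for any $y>0$ with $\eta'(y)\neq 0$; for a point $c\ne0$, the unit vector with $\{v_a,c/|c|\}$ a positively oriented orthonormal frame; for the origin, any unit vector. Axial curvature $\kappa_a(p)=\min_{y}\langle\eta(y),v_a\rangle$.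 *)

(* Defs.v *)
From HB Require Import structures.
From mathcomp Require Import all_boot all_order all_algebra.
From mathcomp Require Import all_classical all_reals all_analysis.
Set Implicit Arguments. Unset Strict Implicit. Unset Printing Implicit Defensive.
Import Order.TTheory GRing.Theory Num.Theory.
Import numFieldNormedType.Exports.
Local Open Scope classical_set_scope.
Local Open Scope ring_scope.

Section Defs.
Variable R : realType.

Definition dot n (x y : 'rV[R]_n) : R := \sum_(i < n) x 0 i * y 0 i.

Fixpoint iter_D (vs : seq 'rV[R]_2) (f : 'rV[R]_2 -> 'rV[R]_3) : 'rV[R]_2 -> 'rV[R]_3 :=
  match vs with
  | [::] => f
  | v :: vs' => fun x => 'D_v (iter_D vs' f) x
  end.

Definition smooth (f : 'rV[R]_2 -> 'rV[R]_3) : Prop :=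
  forall (vs : seq 'rV[R]_2) (x : 'rV[R]_2), differentiable (iter_D vs f) x.

Definition dfq (f : 'rV[R]_2 -> 'rV[R]_3) (q X : 'rV[R]_2) : 'rV[R]_3 := 'D_X f q.

Definition jac (f : 'rV[R]_2 -> 'rV[R]_3) (q : 'rV[R]_2) : 'M[R]_(2, 3) :=
  \matrix_(i < 2) dfq f q (delta_mx 0 i).

Definition corank1 (f : 'rV[R]_2 -> 'rV[R]_3) (q : 'rV[R]_2) : Prop :=
  \rank (jac f q) = 1%N.

Definition tangent (f : 'rV[R]_2 -> 'rV[R]_3) (q : 'rV[R]_2) : set 'rV[R]_3 :=
  [set dfq f q X | X in setT].

Definition normal (f : 'rV[R]_2 -> 'rV[R]_3) (q : 'rV[R]_2) : set 'rV[R]_3 :=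
  [set n | forall w, tangent f q w -> dot n w = 0].

Definition orth_proj (N : set 'rV[R]_3) (x : 'rV[R]_3) : 'rV[R]_3 :=
  xget 0 [set y | N y /\ forall n, N n -> dot (x - y) n = 0].

Definition fff (f : 'rV[R]_2 -> 'rV[R]_3) (q X Y : 'rV[R]_2) : R :=
  dot (dfq f q X) (dfq f q Y).

Definition sff (f : 'rV[R]_2 -> 'rV[R]_3) (q X Y : 'rV[R]_2) : 'rV[R]_3 :=
  orth_proj (normal f q) ('D_X ('D_Y f) q).

Definition curv_parabola (f : 'rV[R]_2 -> 'rV[R]_3) (q : 'rV[R]_2) : set 'rV[R]_3 :=
  [set sff f q X X | X in [set X | fff f q X X = 1]].

Definition binormal (f : 'rV[R]_2 -> 'rV[R]_3) (q : 'rV[R]_2) (nu : 'rV[R]_3) : Prop :=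
  normal f q nu /\ nu != 0 /\
  exists X : 'rV[R]_2, X != 0 /\ forall Y, dot (sff f q X Y) nu = 0.

Definition is_line (S : set 'rV[R]_3) : Prop :=
  exists P w : 'rV[R]_3, w != 0 /\ S = [set P + t *: w | t in [set: R]].

(* non-degenerate parabola in N with vertex V, axis V + R e2, interior side +e2 *)
Definition is_parabola_with_axis (N : set 'rV[R]_3) (S : set 'rV[R]_3) (e2 : 'rV[R]_3) : Prop :=
  exists (V e1 : 'rV[R]_3) (k : R),
    [/\ N e1, N e2, dot e1 e1 = 1, dot e2 e2 = 1 & dot e1 e2 = 0] /\ 0 < k /\
    S = [set V + s *: e1 + (k * s ^+ 2) *: e2 | s in [set: R]].

Definition is_half_line_dir (S : set 'rV[R]_3) (w : 'rV[R]_3) : Prop :=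
  dot w w = 1 /\ exists E : 'rV[R]_3, S = [set E + t *: w | t in [set t : R | 0 <= t]].

Definition det3 (a b c : 'rV[R]_3) : R :=
  \det (\matrix_(i < 3) (if i == 0 :> nat then a else if i == 1 :> nat then b else c)).

(* The orientation of N_pM is given by a nonzero tangent vector t: a frame (e1,e2)
   of N_pM is positively oriented iff (t, e1, e2) is a positive frame of R^3. *)
Definition pos_oriented (t e1 e2 : 'rV[R]_3) : Prop := 0 < det3 t e1 e2.

Definition axial_vector (f : 'rV[R]_2 -> 'rV[R]_3) (q : 'rV[R]_2) (t v : 'rV[R]_3) : Prop :=
  let N := normal f q in
  let S := curv_parabola f q in
  is_parabola_with_axis N S v
  \/ is_half_line_dir S v
  \/ (exists c : 'rV[R]_3, c != 0 /\ S = [set c] /\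
        N v /\ dot v v = 1 /\ dot v c = 0 /\ pos_oriented t v c)
  \/ (S = [set 0] /\ N v /\ dot v v = 1).

Definition axial_curvature (f : 'rV[R]_2 -> 'rV[R]_3) (q : 'rV[R]_2) (v : 'rV[R]_3) : R :=
  inf [set dot x v | x in curv_parabola f q].

End Defs.

(* Main.v *)
Require Import Defs.
From HB Require Import structures.
From mathcomp Require Import all_boot all_order all_algebra.
From mathcomp Require Import all_classical all_reals all_analysis.
From mathcomp Require Import ring lra.
Import Order.TTheory GRing.Theory Num.Theory.
Import numFieldNormedType.Exports.
Local Open Scope classical_set_scope.
Local Open Scope ring_scope.

Section S.
Context {R : realType} {V : normedModType R}.

Lemma diff_eps {W : normedModType R} {f : V -> W} {x} : differentiable f x -> forall e : R, 0 < e ->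
  exists2 d : R, 0 < d & forall z, `|z| < d -> `|f (z + x) - f x - 'd f x z| <= e * `|z|.
Proof.
move=> /diff_locally /eqaddoP H e e0.
have := H e e0.
move=> /nbhs_ballP [d d0 Hd]; exists d => // z zd.
have := Hd z; rewrite -ball_normE /= sub0r normrN => /(_ zd).
by rewrite /= opprD addrA.
Qed.

Lemma der_line {W : normedModType R} (h : V -> W) a X s : derivable h (a + s *: X) X ->
  is_derive s (1:R) (fun r : R => h (a + r *: X)) ('D_X h (a + s *: X)).
Proof.
move=> dh.
have E : (fun r : R => r^-1 *: (((fun r => h (a + r *: X)) \o shift s) (r *: 1) - h (a + s*:X)))
  = (fun r => r^-1 *: ((h \o shift (a + s*:X)) (r *: X) - h (a+s*:X))).
  apply/funext => r /=; congr (_ *: (h _ - _)).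
  by rewrite scaler1 scalerDl addrCA addrC.
apply: DeriveDef; rewrite /derivable /derive /=.
  by rewrite E.
by rewrite E.
Qed.
Lemma schwarz_half (h : V -> R) q X Y :
  (forall x, differentiable h x) -> differentiable ('D_X h) q ->
  forall e : R, 0 < e -> exists2 d : R, 0 < d & forall t : R, 0 < t -> t < d ->
   `| h (q + t*:Y + t*:X) - h (q + t*:X) - h (q + t*:Y) + h q
      - t^+2 * 'D_Y ('D_X h) q | <= e * t^+2.
Proof.
move=> dh dg e e0.
set g := 'D_X h.
set M := 2 * `|X| + `|Y|.
have M0 : 0 <= M by rewrite /M addr_ge0 ?mulr_ge0 ?normr_ge0.
have e'0 : 0 < e / (M + 1) by rewrite divr_gt0 // ltr_wpDl.
have [d' d'0 Hd'] := diff_eps dg _ e'0.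
exists (d' / (`|X| + `|Y| + 1)).
  by rewrite divr_gt0 // ltr_wpDl // addr_ge0.
move=> t t0 td.
pose phi := fun s : R => h ((q + t*:Y) + s *: X) - h (q + s *: X).
pose dphi := fun s : R => g ((q + t*:Y) + s *: X) - g (q + s *: X).
have Dphi : forall s, is_derive s (1:R) phi (dphi s).
  move=> s; rewrite /phi /dphi.
  apply: is_deriveB; apply: der_line; exact: diff_derivable.
have cphi : {within `[0, t], continuous phi}.
  apply: continuous_subspaceT => s.
  apply: differentiable_continuous; apply/derivable1_diffP.
  by have [] := Dphi s.
have [c cin Hc] := MVT t0 (fun s _ => Dphi s) cphi.
have c0 : 0 < c by rewrite (itvP cin).
have ct : c < t by rewrite (itvP cin).
have E1 : h (q + t *: Y + t *: X) - h (q + t *: X) - h (q + t *: Y) + h q = phi t - phi 0.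
  rewrite /phi !scale0r !addr0; ring.
rewrite E1 Hc subr0 /dphi (deriveE _ dg).
have -> : q + t *: Y + c *: X = (c *: X + t *: Y) + q by rewrite addrC addrCA addrC.
have -> : q + c *: X = c *: X + q by rewrite addrC.
set z1 := c *: X + t *: Y.
have Ez1 : 'd g q z1 = c *: 'd g q X + t *: 'd g q Y by rewrite linearD !linearZ.
have -> : (g (z1 + q) - g (c *: X + q)) * t - t ^+ 2 * 'd g q Y =
  t * ((g (z1 + q) - g q - 'd g q z1) - (g (c *: X + q) - g q - 'd g q (c *: X))).
  have Ec : 'd g q (c *: X) = c *: 'd g q X by rewrite linearZ.
  rewrite Ez1 Ec /GRing.scale /=. ring.
have nX := normr_ge0 X.
have nY := normr_ge0 Y.
have nz1 : `|z1| <= t * (`|X| + `|Y|).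
  rewrite /z1; apply: le_trans (ler_normD _ _) _; rewrite !normrZ (ger0_norm (ltW c0)) (ger0_norm (ltW t0)).
  nra.
have ncx : `|c *: X| <= t * `|X|.
  rewrite normrZ (ger0_norm (ltW c0)); nra.
have td' : t * (`|X| + `|Y|) < d'.
  rewrite ltr_pdivlMr in td; last by rewrite ltr_wpDl // addr_ge0.
  nra.
have HA := Hd' z1 (le_lt_trans nz1 td').
have ncx' : `|c *: X| < d'.
  apply: le_lt_trans ncx _; nra.
have HB := Hd' _ ncx'.
rewrite -/g in HA HB.
move: HA HB; set A := g (z1 + q) - g q - 'd g q z1; set B := g (c *: X + q) - g q - 'd g q (c *: X).
move=> HA HB.
set ee := e / (M + 1) in HA HB e'0.
have eeM : ee * M <= e.
  have : ee * (M + 1) = e by rewrite /ee divfK // gt_eqF // ltr_wpDl.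
  nra.
have HAB := ler_normB A B.
have H1 : `|A - B| <= ee * (t * M).
  apply: le_trans HAB _; rewrite /M; nra.
rewrite normrM (ger0_norm (ltW t0)).
have nAB := normr_ge0 (A - B).
nra.
Qed.


Lemma schwarz_scalar (h : V -> R) q X Y : (forall x, differentiable h x) ->
  differentiable ('D_X h) q -> differentiable ('D_Y h) q ->
  'D_Y ('D_X h) q = 'D_X ('D_Y h) q.
Proof.
move=> dh dX dY.
set L1 := 'D_Y ('D_X h) q; set L2 := 'D_X ('D_Y h) q.
apply/eqP; rewrite -subr_eq0 -normr_eq0; apply/eqP.
set D := `|L1 - L2|.
have D0 : 0 <= D by exact: normr_ge0.
have [//|Dn0] := eqVneq D 0.
have Dp : 0 < D by rewrite lt_neqAle eq_sym Dn0 D0.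
have e0 : 0 < D / 4 by rewrite divr_gt0.
have [d1 d10 H1] := @schwarz_half h q X Y dh dX _ e0.
have [d2 d20 H2] := @schwarz_half h q Y X dh dY _ e0.
set t := Num.min d1 d2 / 2.
have t0 : 0 < t by rewrite divr_gt0 // lt_min d10 d20.
have tm : t < Num.min d1 d2 by rewrite /t ltr_pdivrMr // ltr_pMr // ?lt_min ?d10 ?d20 // ltr1n.
have td1 : t < d1 by apply: lt_le_trans tm _; rewrite ge_min lexx.
have td2 : t < d2 by apply: lt_le_trans tm _; rewrite ge_min lexx orbT.
have K1 := H1 t t0 td1.
have K2 := H2 t t0 td2.
rewrite -/L1 in K1; rewrite -/L2 in K2.
move: K1 K2.
have -> : q + t *: X + t *: Y = q + t *: Y + t *: X by rewrite addrAC.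
set E1 := h (q + t *: Y + t *: X) - h (q + t *: X) - h (q + t *: Y) + h q.
have -> : h (q + t *: Y + t *: X) - h (q + t *: Y) - h (q + t *: X) + h q = E1
  by rewrite /E1; ring.
move=> K1 K2.
have tt : 0 < t ^+ 2 by rewrite exprn_gt0.
have K3 : t ^+ 2 * D <= `|E1 - t ^+ 2 * L2| + `|E1 - t ^+ 2 * L1|.
  have -> : t ^+ 2 * D = `|(E1 - t ^+ 2 * L2) - (E1 - t ^+ 2 * L1)|.
    rewrite /D -{1}(ger0_norm (ltW tt)) -normrM; congr `|_|; ring.
  exact: ler_normB.
have K4 : t ^+ 2 * D <= t ^+ 2 * (D / 2).
  apply: le_trans K3 _.
  have -> : t ^+ 2 * (D / 2) = D / 4 * t ^+ 2 + D / 4 * t ^+ 2.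
    by field.
  exact: lerD K2 K1.
have K5 : D / 2 < D by rewrite ltr_pdivrMr // ltr_pMr // ltr1n.
rewrite ler_pM2l // in K4.
by have := lt_le_trans K5 K4; rewrite ltxx.
Qed.
End S.

Section T.
Context {R : realType}.
Implicit Types (f : 'rV[R]_2 -> 'rV[R]_3).

Lemma smooth_diff f x : smooth f -> differentiable f x.
Proof. by move=> sf; exact: (sf [::] x). Qed.

Lemma smooth_diff1 f Y x : smooth f -> differentiable ('D_Y f) x.
Proof. by move=> sf; exact: (sf [:: Y] x). Qed.

Lemma D2_sym f q X Y : smooth f -> 'D_X ('D_Y f) q = 'D_Y ('D_X f) q.
Proof.
move=> sf; apply/rowP => j.
pose h := fun x => f x 0 j.
have Dh : forall Z, (fun x => 'D_Z f x 0 j) = 'D_Z h.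
  move=> Z; apply/funext => x.
  by rewrite derive_mx ?mxE //; apply: diff_derivable; exact: smooth_diff.
rewrite derive_mx; last by apply: diff_derivable; exact: smooth_diff1.
rewrite mxE Dh.
rewrite derive_mx; last by apply: diff_derivable; exact: smooth_diff1.
rewrite mxE Dh.
have dcoord : forall (g : 'rV[R]_2 -> 'rV[R]_3) x, differentiable g x ->
    differentiable (fun y => g y 0 j) x.
  move=> g x dg.
  exact: (@differentiable_comp _ _ _ _ g (fun N : 'rV[R]_3 => N 0 j) x dg (differentiable_coord _ _ _)).
symmetry; apply: schwarz_scalar.
- by move=> x; apply: dcoord; exact: smooth_diff.
- by rewrite -Dh; apply: dcoord; exact: smooth_diff1.
- by rewrite -Dh; apply: dcoord; exact: smooth_diff1.
Qed.
End T.

Section U.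
Context {R : realType}.
Implicit Types (f : 'rV[R]_2 -> 'rV[R]_3).

Lemma dotDl {n} (x y z : 'rV[R]_n) : dot (x + y) z = dot x z + dot y z.
Proof. by rewrite /dot -big_split /=; apply: eq_bigr => i _; rewrite mxE mulrDl. Qed.

Lemma dotZl {n} a (x y : 'rV[R]_n) : dot (a *: x) y = a * dot x y.
Proof. by rewrite /dot mulr_sumr; apply: eq_bigr => i _; rewrite mxE mulrA. Qed.

Lemma dotC {n} (x y : 'rV[R]_n) : dot x y = dot y x.
Proof. by rewrite /dot; apply: eq_bigr => i _; rewrite mulrC. Qed.

Lemma dot0l {n} (y : 'rV[R]_n) : dot 0 y = 0.
Proof. by rewrite /dot big1 // => i _; rewrite mxE mul0r. Qed.

Lemma dotNl {n} (x y : 'rV[R]_n) : dot (- x) y = - dot x y.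
Proof. by rewrite -scaleN1r dotZl mulN1r. Qed.

Lemma dotBl {n} (x y z : 'rV[R]_n) : dot (x - y) z = dot x z - dot y z.
Proof. by rewrite dotDl dotNl. Qed.

Lemma dotDr {n} (x y z : 'rV[R]_n) : dot z (x + y) = dot z x + dot z y.
Proof. by rewrite dotC dotDl !(dotC z). Qed.

Lemma dotZr {n} a (x y : 'rV[R]_n) : dot y (a *: x) = a * dot y x.
Proof. by rewrite dotC dotZl dotC. Qed.

Lemma dot_ge0 {n} (x : 'rV[R]_n) : 0 <= dot x x.
Proof. by rewrite /dot sumr_ge0 // => i _; rewrite -expr2 sqr_ge0. Qed.

Lemma dot_eq0 {n} (x : 'rV[R]_n) : dot x x = 0 -> x = 0.
Proof.
move=> /psumr_eq0P H; apply/rowP => i; rewrite mxE.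
have := H (fun j _ => eq_ind _ (fun z => 0 <= z) (sqr_ge0 (x 0 j)) _ (expr2 _)) i isT.
by move/eqP; rewrite -expr2 sqrf_eq0 => /eqP.
Qed.

Lemma scal_eq0 {n} a (x : 'rV[R]_n) : dot x x = 1 -> a *: x = 0 -> a = 0.
Proof.
move=> x1 ax; have := dot0l (a *: x); rewrite -{1}ax dotZl dotZr x1 mulr1.
by move/eqP; rewrite mulf_eq0 orbb => /eqP.
Qed.

Lemma ord2 (i : 'I_2) : i = 0 \/ i = 1.
Proof. by case: i => [[|[|//]]] Hi; [left|right]; apply/val_inj. Qed.

Lemma dflin f q a b X Y : smooth f ->
  dfq f q (a *: X + b *: Y) = a *: dfq f q X + b *: dfq f q Y.
Proof. by move=> sf; rewrite /dfq !(deriveE _ (smooth_diff _ q sf)) linearD !linearZ. Qed.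

Lemma dfZ f q a X : smooth f -> dfq f q (a *: X) = a *: dfq f q X.
Proof.
move=> sf; rewrite /dfq !(deriveE _ (smooth_diff _ q sf)).
by rewrite linearZ.
Qed.

Lemma df0 f q : smooth f -> dfq f q 0 = 0.
Proof. by move=> sf; rewrite -(scale0r 0) dfZ // scale0r. Qed.

Lemma dfmx f q X : smooth f -> dfq f q X = X *m jac f q.
Proof.
move=> sf; rewrite /dfq (deriveE _ (smooth_diff _ q sf)).
rewrite {1}(row_sum_delta X) linear_sum; apply/rowP => j.
rewrite mxE summxE; apply: eq_bigr => i _.
  have H : 'd f q (X 0 i *: delta_mx 0 i) = X 0 i *: 'd f q (delta_mx 0 i) by rewrite linearZ.
  by rewrite H !mxE /jac /dfq (deriveE _ (smooth_diff _ q sf)).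
Qed.

Lemma setup f q : smooth f -> corank1 f q -> exists X0 K : 'rV[R]_2,
  [/\ K != 0, dfq f q K = 0, dot (dfq f q X0) (dfq f q X0) = 1 &
      forall X : 'rV[R]_2, exists a b, X = a *: X0 + b *: K].
Proof.
move=> sf cr.
have [K Kn0 HK] : exists2 K : 'rV[R]_2, K != 0 & dfq f q K = 0.
  have : kermx (jac f q) != 0 by rewrite -mxrank_eq0 mxrank_ker cr.
  case/rowV0Pn => K /sub_kermxP HK Kn0; exists K => //.
  by rewrite dfmx.
have [i Hi] : exists i, dfq f q (delta_mx 0 i) != 0.
  case: (eqVneq (dfq f q (delta_mx 0 0)) 0) => H0; last by exists 0.
  case: (eqVneq (dfq f q (delta_mx 0 1)) 0) => H1; last by exists 1.
  exfalso.
  have J : jac f q = 0.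
    apply/matrixP => i j; rewrite /jac !mxE.
    by case: (ord2 i) => ->; rewrite ?H0 ?H1 mxE.
  by move: cr; rewrite /corank1 J mxrank0.
set T' := dfq f q (delta_mx 0 i).
set s := dot T' T'.
have s0 : 0 < s.
  rewrite lt_neqAle dot_ge0 andbT eq_sym; apply/negP => /eqP /dot_eq0 T0.
  by move: Hi; rewrite -/T' T0 eqxx.
pose X0 : 'rV[R]_2 := (Num.sqrt s)^-1 *: delta_mx 0 i.
have dX0 : dfq f q X0 = (Num.sqrt s)^-1 *: T'.
  by rewrite /X0 dfZ.
have X01 : dot (dfq f q X0) (dfq f q X0) = 1.
  rewrite dX0 dotZl dotZr -/s mulrA -expr2 exprVn sqr_sqrtr ?ltW //.
  by rewrite mulVf // gt_eqF.
clearbody X0.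
exists X0, K; split => //.
pose D := X0 0 0 * K 0 1 - X0 0 1 * K 0 0.
have D0 : D != 0.
  apply/negP => /eqP D0.
  have E0 : K 0 0 *: X0 + (- X0 0 0) *: K = 0.
    apply/rowP => j; rewrite !mxE.
    by case: (ord2 j) => ->; [ring|move: D0; rewrite /D => D0; nra].
  have E1 : K 0 1 *: X0 + (- X0 0 1) *: K = 0.
    apply/rowP => j; rewrite !mxE.
    by case: (ord2 j) => ->; [move: D0; rewrite /D => D0; nra|ring].
  have : dfq f q (K 0 0 *: X0 + (- X0 0 0) *: K) = dfq f q 0 by rewrite E0.
  rewrite dflin // HK scaler0 addr0.
  rewrite df0 //.
  move/(@scal_eq0 _ _ _ X01) => K00.
  have : dfq f q (K 0 1 *: X0 + (- X0 0 1) *: K) = dfq f q 0 by rewrite E1.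
  rewrite dflin // HK scaler0 addr0.
  rewrite df0 //.
  move/(@scal_eq0 _ _ _ X01) => K01.
  move: Kn0; have -> : K = 0 by apply/rowP => j; rewrite mxE; case: (ord2 j) => ->.
  by rewrite eqxx.
move=> X.
exists ((X 0 0 * K 0 1 - X 0 1 * K 0 0) / D), ((X0 0 0 * X 0 1 - X0 0 1 * X 0 0) / D).
apply/rowP => j; rewrite !mxE.
by case: (ord2 j) => ->; rewrite /D; field.
Qed.

End U.

Section V.
Context {R : realType}.

Lemma inf_min (W : set R) m : W m -> (forall z, W z -> m <= z) -> inf W = m.
Proof.
move=> Wm lb; apply/le_anti/andP; split.
  by apply: (ge_inf _ Wm); exists m => z Wz; exact: lb.
by apply: lb_le_inf; [exists m|move=> z Wz; exact: lb].
Qed.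

Lemma quad_ray (a b c m : R) :
  (forall y, m <= a + 2 * b * y + c * y ^+ 2) ->
  (exists y, a + 2 * b * y + c * y ^+ 2 = m) ->
  (exists y, m < a + 2 * b * y + c * y ^+ 2) ->
  (m = 0 <-> a * c = b ^+ 2).
Proof.
move=> H [y1 H1] [y2 H2].
have cpos : 0 < c.
  case: (ltrP 0 c) => // c0; exfalso.
  case: (eqVneq b 0) => b0.
  - case: (ltrP c 0) => c0'.
    + pose y := 1 + (a - m) / (- c).
      have am : m <= a by have := H 0; rewrite mulr0 expr0n /= mulr0 !addr0.
      have y1' : 1 <= y by rewrite /y lerDl divr_ge0 // ?subr_ge0 // oppr_ge0 ltW.
      have cy : c * y = c - (a - m) by rewrite /y; field; rewrite ?oppr_eq0 (lt_eqF c0').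
      have := H y; rewrite b0 mulr0 mul0r addr0 => Hy.
      nra.
    + have cz : c = 0 by apply/le_anti; rewrite c0 c0'.
      move: H1 H2; rewrite b0 cz !(mul0r, mulr0, addr0) => ->.
      by rewrite ltxx.
  - pose y := (m - a - 1) / (2 * b).
    have Ey : 2 * b * y = m - a - 1 by rewrite /y; field; rewrite b0.
    have := H y; rewrite Ey => Hy.
    have : c * y ^+ 2 <= 0 by rewrite mulr_le0_ge0 // sqr_ge0.
    lra.
have cn0 : c != 0 by rewrite gt_eqF.
have H0 := H (- b / c).
have E0 : c * (a + 2 * b * (- b / c) + c * (- b / c) ^+ 2) = a * c - b ^+ 2 by field.
have L1 : c * m <= a * c - b ^+ 2 by rewrite -E0 ler_wpM2l // ltW.
have L2 : a * c - b ^+ 2 <= c * m.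
  rewrite -H1.
  have : 0 <= (c * y1 + b) ^+ 2 by rewrite sqr_ge0.
  nra.
have Hm : c * m = a * c - b ^+ 2 by apply/le_anti; rewrite L1 L2.
split => [m0|e].
  by move: Hm; rewrite m0 mulr0 => /eqP; rewrite eq_sym subr_eq0 => /eqP.
by move: Hm; rewrite e subrr => /eqP; rewrite mulf_eq0 (negbTE cn0) => /eqP.
Qed.

Lemma quad_zero (a b c : R) :
  (forall y, a + 2 * b * y + c * y ^+ 2 = 0) -> a * c = b ^+ 2.
Proof.
move=> H; have h0 := H 0; have h1 := H 1; have h2 := H (-1).
move: h0 h1 h2; rewrite !expr2 /=; nra.
Qed.

End V.

Lemma Blin_lem {R : realType} (f : 'rV[R]_2 -> 'rV[R]_3) q Y a b X1 X2 : smooth f ->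
  'D_(a *: X1 + b *: X2) ('D_Y f) q = a *: 'D_X1 ('D_Y f) q + b *: 'D_X2 ('D_Y f) q.
Proof.
move=> sf; rewrite !(deriveE _ (smooth_diff1 f Y q sf)).
have H1 : 'd ('D_Y f) q (a *: X1) = a *: 'd ('D_Y f) q X1 by rewrite linearZ.
have H2 : 'd ('D_Y f) q (b *: X2) = b *: 'd ('D_Y f) q X2 by rewrite linearZ.
by rewrite linearD H1 H2.
Qed.

Theorem mainTheorem9 (R : realType) (f : 'rV[R]_2 -> 'rV[R]_3) (q : 'rV[R]_2)
    (t v : 'rV[R]_3) :
  smooth f -> corank1 f q ->
  tangent f q t -> t != 0 ->
  ~ is_line (curv_parabola f q) ->
  axial_vector f q t v ->
  (axial_curvature f q v = 0 <-> binormal f q v).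
Proof.
move=> sf cr _ _ _ ax.
have [X0 [K [Kn0 HK X01 dec]]] := setup _ _ sf cr.
set T0 := dfq f q X0 in X01.
have dfdec : forall a b, dfq f q (a *: X0 + b *: K) = a *: T0.
  by move=> a b; rewrite dflin // HK scaler0 addr0.
have Ntan : forall n, normal f q n <-> dot n T0 = 0.
  move=> n; split.
    by move=> H; apply: H; exists X0.
  move=> H w [X _ <-]; have [a [b ->]] := dec X.
  by rewrite dfdec dotZr H mulr0.
have projex : forall x : 'rV[R]_3, exists y, normal f q y /\
    forall n, normal f q n -> dot (x - y) n = 0.
  move=> x; exists (x - dot x T0 *: T0); split.
    by apply/Ntan; rewrite dotBl dotZl X01 mulr1 subrr.
  move=> n /Ntan Hn.
  have -> : x - (x - dot x T0 *: T0) = dot x T0 *: T0 by rewrite opprB addrC subrK.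
  by rewrite dotZl (dotC T0) Hn mulr0.
pose BB X Y := 'D_X ('D_Y f) q.
have sffP : forall X Y, normal f q (sff f q X Y) /\
    forall n, normal f q n -> dot (BB X Y - sff f q X Y) n = 0.
  by move=> X Y; rewrite /sff /orth_proj; apply: (xgetPex 0 (projex _)).
have sffdot : forall X Y n, normal f q n -> dot (sff f q X Y) n = dot (BB X Y) n.
  move=> X Y n Nn; have [_ H] := sffP X Y; have := H n Nn.
  by rewrite dotBl => /eqP; rewrite subr_eq0 => /eqP.
have Blin : forall a b X1 X2 Y, BB (a *: X1 + b *: X2) Y = a *: BB X1 Y + b *: BB X2 Y.
  by move=> a b X1 X2 Y; rewrite /BB Blin_lem.
have Bsym : forall X Y, BB X Y = BB Y X by move=> X Y; exact: (D2_sym f q X Y sf).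
clearbody BB.
have Snorm : forall x, curv_parabola f q x -> normal f q x.
  by move=> x [X _ <-]; exact: (sffP X X).1.
have inS : forall y : R, curv_parabola f q (sff f q (1 *: X0 + y *: K) (1 *: X0 + y *: K)).
  by move=> y; exists (1 *: X0 + y *: K) => //; rewrite /fff /= dfdec scale1r.
have v10 : forall w : 'rV[R]_3, dot w w = 1 -> w != 0.
  by move=> w w1; apply/negP => /eqP w0; move: w1; rewrite w0 dot0l => /eqP; rewrite eq_sym oner_eq0.
suff main : normal f q v -> v != 0 ->
   ((exists m, [/\ (forall x, curv_parabola f q x -> m <= dot x v),
       (exists2 x, curv_parabola f q x & dot x v = m) &
       (exists2 x, curv_parabola f q x & m < dot x v)])
    \/ (forall x, curv_parabola f q x -> dot x v = 0)) ->
   (axial_curvature f q v = 0 <-> binormal f q v).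
  case: ax => [[V [e1 [k [[Ne1 Ne2 e11 e22 e12] [k0 HS]]]]]|[[v1 [E HS]]|[[c0 [c0n0 [HS [Nv [v1 [vc _]]]]]]|[HS [Nv v1]]]]].
  - apply: main => //; first exact: v10.
    left; exists (dot V v).
    have dotS : forall s, dot (V + s *: e1 + (k * s ^+ 2) *: v) v = dot V v + k * s ^+ 2.
      by move=> s; rewrite !dotDl !dotZl e12 e22 mulr0 addr0 mulr1.
    split.
    + by move=> x; rewrite HS => -[s _ <-]; rewrite dotS lerDl mulr_ge0 ?sqr_ge0 ?(ltW k0).
    + exists V => //; rewrite HS; exists 0 => //.
      by rewrite scale0r addr0 expr0n /= mulr0 scale0r addr0.
    + exists (V + 1 *: e1 + (k * 1 ^+ 2) *: v); first by rewrite HS; exists 1.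
      by rewrite dotS expr1n mulr1 ltrDl.
  - have SE : curv_parabola f q E by rewrite HS; exists 0; [rewrite /= lexx|rewrite scale0r addr0].
    have SE1 : curv_parabola f q (E + 1 *: v) by rewrite HS; exists 1; [rewrite /= ler01|].
    have dotS : forall s, dot (E + s *: v) v = dot E v + s.
      by move=> s; rewrite dotDl dotZl v1 mulr1.
    apply: main; last 1 first.
    + left; exists (dot E v); split.
      * by move=> x; rewrite HS => -[s /= s0 <-]; rewrite dotS lerDl.
      * by exists E.
      * by exists (E + 1 *: v) => //; rewrite dotS ltrDl.
    + apply/Ntan; have := Snorm _ SE; have := Snorm _ SE1; move=> /Ntan h1 /Ntan h2.
      by move: h1; rewrite dotDl dotZl h2 add0r mul1r.
    + exact: v10.
  - apply: main => //; first exact: v10.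
    by right => x; rewrite HS => ->; rewrite dotC.
  - apply: main => //; first exact: v10.
    by right => x; rewrite HS => ->; rewrite dot0l.
move=> hv vn0 cases.
set a := dot (BB X0 X0) v; set b := dot (BB X0 K) v; set c := dot (BB K K) v.
have Bl0 : forall al be, dot (BB (al *: X0 + be *: K) X0) v = al * a + be * b.
  by move=> al be; rewrite Blin dotDl !dotZl (Bsym K X0).
have BlK : forall al be, dot (BB (al *: X0 + be *: K) K) v = al * b + be * c.
  by move=> al be; rewrite Blin dotDl !dotZl.
have Bexp : forall al be ga de, dot (BB (al *: X0 + be *: K) (ga *: X0 + de *: K)) v
    = al * ga * a + (al * de + be * ga) * b + be * de * c.
  move=> al be ga de.
  rewrite Bsym Blin dotDl !dotZl Bsym Bl0 Bsym BlK; ring.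
pose p := fun y : R => a + 2 * b * y + c * y ^+ 2.
have pS : forall y, dot (sff f q (1 *: X0 + y *: K) (1 *: X0 + y *: K)) v = p y.
  by move=> y; rewrite sffdot // Bexp /p; ring.
have Sp : forall x, curv_parabola f q x -> exists y, dot x v = p y.
  move=> x [X HX <-]; have [al [be EX]] := dec X.
  move: HX; rewrite EX /= /fff dfdec dotZl dotZr X01 mulr1 => e.
  exists (al * be); rewrite sffdot // Bexp /p.
  rewrite (_ : c * (al * be) ^+ 2 = (al * al) * (be * be * c)); last by ring.
  rewrite !e !mul1r.
  ring.
have bin : binormal f q v <-> a * c = b ^+ 2.
  split.
  - move=> [_ [_ [X [Xn0 HX]]]]; have [al [be EX]] := dec X.
    have h1 := HX X0; have h2 := HX K.
    rewrite sffdot // EX Bl0 in h1; rewrite sffdot // EX BlK in h2.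
    have k1 : al * (a * c - b ^+ 2) = c * (al * a + be * b) - b * (al * b + be * c) by ring.
    have k2 : be * (a * c - b ^+ 2) = a * (al * b + be * c) - b * (al * a + be * b) by ring.
    rewrite h1 h2 !mulr0 subrr in k1 k2.
    case: (eqVneq (a * c - b ^+ 2) 0) => [/eqP|D0]; first by rewrite subr_eq0 => /eqP.
    move: k1 k2 => /eqP; rewrite mulf_eq0 (negbTE D0) orbF => /eqP al0 /eqP.
    rewrite mulf_eq0 (negbTE D0) orbF => /eqP be0.
    by move: Xn0; rewrite EX al0 be0 !scale0r addr0 eqxx.
  - move=> e; split => //; split => //.
    have X0n0 : X0 != 0.
      apply/negP => /eqP X00; move: X01; rewrite /T0 X00 df0 // dot0l => /eqP.
      by rewrite eq_sym oner_eq0.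
    case: (boolP ((a == 0) && (b == 0))) => [/andP[/eqP a0 /eqP b0]|ab].
      exists X0; split => // Y; have [ga [de ->]] := dec Y.
      by rewrite sffdot // Bsym Bl0 a0 b0 !mulr0 addr0.
    exists (b *: X0 + (- a) *: K); split.
      apply/negP => /eqP X00.
      have := congr1 (dfq f q) X00; rewrite dfdec df0 // => /(@scal_eq0 _ _ _ _ X01) b0.
      move: X00; rewrite b0 scale0r add0r => /eqP; rewrite scaler_eq0 (negbTE Kn0) orbF oppr_eq0.
      by move=> a0; move: ab; rewrite a0 b0 eqxx.
    move=> Y; have [ga [de ->]] := dec Y.
    rewrite sffdot // Bexp.
    rewrite (_ : b * ga * a + (b * de + - a * ga) * b + - a * de * c = de * (b ^+ 2 - a * c)); last by ring.
    by rewrite e subrr mulr0.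
rewrite bin.
case: cases => [[m [lbS [x1 Sx1 Ex1] [x2 Sx2 Ex2]]]|H0].
- have -> : axial_curvature f q v = m.
    apply: inf_min; first by exists x1.
    by move=> z [x Sx <-]; exact: lbS.
  apply: quad_ray.
  + by move=> y; rewrite -/(p y) -pS; apply: lbS; exact: inS.
  + by have [y Ey] := Sp _ Sx1; exists y; rewrite -/(p y) -Ey.
  + by have [y Ey] := Sp _ Sx2; exists y; rewrite -/(p y) -Ey.
- have -> : axial_curvature f q v = 0.
    apply: inf_min; first by exists (sff f q (1 *: X0 + 0 *: K) (1 *: X0 + 0 *: K)); [exact: inS|exact: H0].
    by move=> z [x Sx <-]; rewrite H0.
  have : a * c = b ^+ 2.
    by apply: quad_zero => y; rewrite -/(p y) -pS; apply: H0; exact: inS.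
  by move=> ->.
Qed.
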